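(* Let $\mathbb{R}^m$ be endowed with a norm $\|\cdot\|$. Let $\bar A\in\mathbb{R}^{(m+1)\times n}$ have at least two different columns and let $v\in\mathbb{R}^m$. Suppose $\bar u\in F(v)$ and $x\in\Delta_{n-1}$ satisfy $\bar Ax\ne\bar u$. Then for $d:=\frac{\bar Ax-\bar u}{\|\bar Ax-\bar u\|_v}$, \[ \Phi_v(\bar A)\le\max\{\lambda:\ \exists\, y,z\in\Delta_{n-1},\ I(y)\subseteq I(x),\ \bar A(y-z)=\lambda d\}. \]
   Context: $\Delta_{n-1}=\{x\in\mathbb{R}^n_+:\sum_ix_i=1\}$; for $x\in\Delta_{n-1}$, $I(x)=\{i: x_i>0\}$. A matrix is identified with the set of its columns; $\mathrm{conv}(\bar A)=\{\bar Ax:x\in\Delta_{n-1}\}$. For $\bar w=(w,w_{m+1})\in\mathbb{R}^{m+1}$, $\|\bar w\|_v=\sqrt{\|w\|^2+|\langle v,w\rangle+w_{m+1}|}$; for nonempty $F,G\subseteq\mathbb{R}^{m+1}$, $\mathrm{dist}_v(F,G)=\min_{\bar w\in F,\bar w'\in G}\|\bar w-\bar w'\|_v$. $F(v)=\operatorname{Argmin}_{\bar w\in\mathrm{conv}(\bar A)}\langle(v,1),\bar w\rangle$, a face of $\mathrm{conv}(\bar A)$. The local facial distance is $\Phi_v(\bar A)=\min\{\mathrm{dist}_v(G,\mathrm{conv}(\bar A\setminus G)):G\text{ a face of }F(v),\ \emptyset\ne G\ne\mathrm{conv}(\bar A)\}$, where $\bar A\setminus G$ denotes the columns of $\bar A$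 not in $G$. *)

(* Defs.v *)
From HB Require Import structures.
From mathcomp Require Import all_boot all_order all_algebra.
From mathcomp Require Import classical_sets reals.
Set Implicit Arguments. Unset Strict Implicit. Unset Printing Implicit Defensive.
Import Order.TTheory GRing.Theory Num.Theory.
Local Open Scope ring_scope.
Local Open Scope classical_set_scope.

Definition is_norm (R : realType) (m : nat) (N : 'cV[R]_m -> R) : Prop :=
  [/\ forall x, N x = 0 -> x = 0,
      forall (a : R) x, N (a *: x) = `|a| * N x
    & forall x y, N (x + y) <= N x + N y].

Definition dotv (R : realType) (m : nat) (v w : 'cV[R]_m) : R :=
  \sum_(i < m) v i 0 * w i 0.

(* wb = (w, w_{m+1}) in R^{m+1}: w = usubmx wb, w_{m+1} = dsubmx wb 0 0. *)
Definition vnorm (R : realType) (m : nat) (N : 'cV[R]_m -> R) (v : 'cV[R]_m)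
  (wb : 'cV[R]_(m + 1)) : R :=
  Num.sqrt (N (usubmx wb) ^+ 2 + `| dotv v (usubmx wb) + dsubmx wb 0 0 |).

Definition lin1 (R : realType) (m : nat) (v : 'cV[R]_m) (wb : 'cV[R]_(m + 1)) : R :=
  dotv v (usubmx wb) + dsubmx wb 0 0.

Definition simplex (R : realType) (n : nat) : set 'cV[R]_n :=
  [set x | (forall i, 0 <= x i 0) /\ \sum_(i < n) x i 0 = 1].
Arguments simplex R n : clear implicits.
Arguments simplex {R} n.

Definition supp (R : realType) (n : nat) (x : 'cV[R]_n) : set 'I_n :=
  [set i | 0 < x i 0].

Definition conv_mx (R : realType) (p n : nat) (Ab : 'M[R]_(p, n)) : set 'cV[R]_p :=
  [set Ab *m x | x in simplex n].

Definition conv_cols (R : realType) (p n : nat) (Ab : 'M[R]_(p, n)) (J : set 'I_n)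
  : set 'cV[R]_p :=
  [set Ab *m x | x in [set x | simplex n x /\ (forall j, x j 0 != 0 -> J j)]].

Definition is_face (R : realType) (p : nat) (C G : set 'cV[R]_p) : Prop :=
  [/\ G `<=` C,
      (forall x y (t : R), G x -> G y -> 0 <= t <= 1 -> G (t *: x + (1 - t) *: y))
    & (forall x y (t : R), C x -> C y -> 0 < t < 1 -> G (t *: x + (1 - t) *: y) ->
         G x /\ G y)].

Definition Fv (R : realType) (m n : nat) (v : 'cV[R]_m) (Ab : 'M[R]_(m + 1, n))
  : set 'cV[R]_(m + 1) :=
  [set wb | conv_mx Ab wb /\ forall wb', conv_mx Ab wb' -> lin1 v wb <= lin1 v wb'].

(* dist_v(F, G); the minimum exists for the (compact) sets used below, so it is the inf. *)
Definition distv (R : realType) (m : nat) (N : 'cV[R]_m -> R) (v : 'cV[R]_m)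
  (F G : set 'cV[R]_(m + 1)) : R :=
  inf [set r | exists w w', F w /\ G w' /\ r = vnorm N v (w - w')].

Definition Phi (R : realType) (m n : nat) (N : 'cV[R]_m -> R) (v : 'cV[R]_m)
  (Ab : 'M[R]_(m + 1, n)) : R :=
  inf [set r | exists G : set 'cV[R]_(m + 1),
         [/\ is_face (Fv v Ab) G, G !=set0, G <> conv_mx Ab &
             r = distv N v G (conv_cols Ab [set j | ~ G (col j Ab)])]].

(* Main.v *)
Require Import Defs.
From HB Require Import structures.
From mathcomp Require Import all_boot all_order all_algebra.
From mathcomp Require Import classical_sets reals.
From mathcomp Require Import boolp topology normedtype derive.
From mathcomp Require Import ring lra.
Import Order.TTheory GRing.Theory Num.Theory.
Import numFieldNormedType.Exports.
Set Implicit Arguments. Unset Strict Implicit. Unset Printing Implicit Defensive.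
Local Open Scope ring_scope.
Local Open Scope classical_set_scope.



Definition muf (R : realType) n (x w : 'cV[R]_n) : R :=
  \sum_(i < n) Num.max (x i 0 - w i 0) 0.

Lemma cont_sum (R : realType) (T : topologicalType) (I : Type) (s : seq I)
  (F : I -> T -> R) : (forall i, continuous (F i)) ->
  continuous (fun t => \sum_(i <- s) F i t).
Proof.
move=> cF; elim: s => [|a s IH].
  under eq_fun => ? do rewrite big_nil. exact: cst_continuous.
under eq_fun => ? do rewrite big_cons.
move=> t; apply: (@continuousD _ R^o). exact: cF. exact: IH.
Qed.

Lemma closed_preim (R : realType) (T : topologicalType) (f : T -> R) (P : set R) :
  continuous f -> closed P -> closed [set t | P (f t)].
Proof. by move=> cf cP; move/continuous_closedP: cf; apply. Qed.

Lemma min_exists (R : realType) (p n : nat) (A : 'M[R]_(p, n)) (u : 'cV[R]_p)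
  (x : 'cV[R]_n) :
  (exists w, simplex n w /\ A *m w = u) ->
  exists w, [/\ simplex n w, A *m w = u &
    forall w', simplex n w' -> A *m w' = u -> muf x w <= muf x w'].
Proof.
move=> [w0 [sw0 Aw0]].
pose W : set 'rV[R]_n := [set r | (forall i, 0 <= r 0 i) /\ \sum_i r 0 i = 1 /\
   forall k, \sum_i A k i * r 0 i = u k 0].
have WE r : W r <-> simplex n r^T /\ A *m r^T = u.
  rewrite /W /simplex /=; split.
    move=> [h1 [h2 h3]]; split; first split.
    - by move=> i; rewrite mxE.
    - by rewrite -h2; apply: eq_bigr => i _; rewrite mxE.
    - apply/matrixP => k j; rewrite (ord1 j) -h3 mxE; apply: eq_bigr => i _.
      by rewrite mxE.
  move=> [[h1 h2] h3]; split; first by move=> i; have := h1 i; rewrite mxE.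
  split; first by rewrite -h2; apply: eq_bigr => i _; rewrite mxE.
  move=> k; rewrite -h3 mxE; apply: eq_bigr => i _; by rewrite mxE.
have cW : closed W.
  have -> : W = (\bigcap_(i in setT) [set r : 'rV[R]_n | (fun a => 0 <= a) (r 0 i)]) `&`
     ([set r : 'rV[R]_n | (fun a => a = 1) (\sum_i r 0 i)] `&`
      \bigcap_(k in setT) [set r : 'rV[R]_n | (fun a => a = u k 0) (\sum_i A k i * r 0 i)]).
    apply/seteqP; split => r /=.
      move=> [h1 [h2 h3]]; split; first by move=> i _; apply: h1.
      by split => // k _; apply: h3.
    move=> [h1 [h2 h3]]; split; first by move=> i; apply: h1.
    by split => // k; apply: h3.
  apply: closedI.
    apply: closed_bigI => i _.
    apply: (closed_preim (f := fun r : 'rV[R]_n => r 0 i) (P := fun a => 0 <= a)); last exact: closed_ge.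
    exact: coord_continuous.
  apply: closedI.
    apply: (closed_preim (f := fun r : 'rV[R]_n => \sum_i r 0 i) (P := fun a => a = 1)); last exact: closed_eq.
    apply: cont_sum => i; exact: coord_continuous.
  apply: closed_bigI => k _.
  apply: (closed_preim (f := fun r : 'rV[R]_n => \sum_i A k i * r 0 i) (P := fun a => a = u k 0)); last exact: closed_eq.
  apply: cont_sum => i t.
  apply: (continuousM (s := fun _ : 'rV[R]_n => A k i) (t := fun r : 'rV[R]_n => r 0 i)).
    exact: cst_continuous.
  exact: coord_continuous.
have cpW : compact W.
  apply: (subclosed_compact cW (@rV_compact _ n (fun _ => `[(0:R), 1]%classic) _)).
    by move=> _; apply: segment_compact.
  move=> r [h1 [h2 _]] i /=; rewrite in_itv /= h1 /= -h2.
  rewrite (bigD1 i) //= lerDl; apply: sumr_ge0 => j _; exact: h1.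
have W0 : W !=set0 by exists w0^T; apply/WE; rewrite trmxK.
pose f (r : 'rV[R]_n) := \sum_(i < n) Num.max (x i 0 - r 0 i) 0.
have cf : continuous f.
  apply: cont_sum => i t; apply: (@continuous_max _ _ (fun r : 'rV[R]_n => x i 0 - r 0 i) (fun=> 0)).
    apply: (continuousB (f := fun _ : 'rV[R]_n => x i 0 : R^o) (g := fun r : 'rV[R]_n => r 0 i : R^o)); first exact: cst_continuous.
    exact: coord_continuous.
  exact: cst_continuous.
have [c cW' cmin] := compact_EVT_min W0 cpW (continuous_subspaceT (A := W) cf).
move: cW'; rewrite inE => /WE [sc Ac].
exists c^T; split => // w' sw' Aw'.
have : f c <= f w'^T by apply: cmin; rewrite inE; apply/WE; rewrite trmxK.
rewrite /f /muf; congr (_ <= _); apply: eq_bigr => i _; by rewrite !mxE.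
Qed.



Lemma lin1E (R : realType) m (v : 'cV[R]_m) (w : 'cV[R]_(m + 1)) :
  lin1 v w = \sum_(i < m) v i 0 * w (lshift 1 i) 0 + w (rshift m ord0) 0.
Proof.
rewrite /lin1 /dotv; congr (_ + _); first by apply: eq_bigr => i _; rewrite mxE.
by rewrite mxE.
Qed.

Lemma lin1D (R : realType) m (v : 'cV[R]_m) (a b : 'cV[R]_(m + 1)) :
  lin1 v (a + b) = lin1 v a + lin1 v b.
Proof.
rewrite !lin1E !mxE.
under eq_bigr => i _ do rewrite mxE mulrDr.
rewrite big_split /=; ring.
Qed.

Lemma lin1Z (R : realType) m (v : 'cV[R]_m) k (a : 'cV[R]_(m + 1)) :
  lin1 v (k *: a) = k * lin1 v a.
Proof.
rewrite !lin1E !mxE mulrDr mulr_sumr.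
congr (_ + _); apply: eq_bigr => i _; rewrite mxE; ring.
Qed.

Lemma lin10 (R : realType) m (v : 'cV[R]_m) : lin1 v 0 = 0.
Proof. by rewrite -(scale0r 0) lin1Z mul0r. Qed.

Lemma mul_sum_col (R : realType) p n (A : 'M[R]_(p, n)) (y : 'cV[R]_n) :
  A *m y = \sum_k y k 0 *: col k A.
Proof.
apply/matrixP => i j; rewrite (ord1 j) !mxE summxE; apply: eq_bigr => k _.
by rewrite !mxE mulrC.
Qed.

Lemma lin1_mul (R : realType) m n (v : 'cV[R]_m) (A : 'M[R]_(m + 1, n)) (y : 'cV[R]_n) :
  lin1 v (A *m y) = \sum_k y k 0 * lin1 v (col k A).
Proof.
rewrite mul_sum_col (big_morph (lin1 v) (lin1D v) (lin10 v)).
by apply: eq_bigr => k _; rewrite lin1Z.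
Qed.

Lemma simplex_le1 (R : realType) n (y : 'cV[R]_n) k : simplex n y -> y k 0 <= 1.
Proof.
move=> [h1 h2]; rewrite -h2 (bigD1 k) //= lerDl; apply: sumr_ge0 => j _; exact: h1.
Qed.

Lemma conv_convex (R : realType) p n (A : 'M[R]_(p, n)) a b (t : R) :
  conv_mx A a -> conv_mx A b -> 0 <= t <= 1 -> conv_mx A (t *: a + (1 - t) *: b).
Proof.
move=> [xa [ha1 ha2] <-] [xb [hb1 hb2] <-] /andP[t0 t1].
exists (t *: xa + (1 - t) *: xb); last by rewrite mulmxDr !scalemxAr.
split.
  move=> i; rewrite !mxE; apply: addr_ge0; apply: mulr_ge0 => //.
  by rewrite subr_ge0.
rewrite (eq_bigr (fun i => t * xa i 0 + (1 - t) * xb i 0)); last first.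
  by move=> i _; rewrite !mxE.
rewrite big_split /= -!mulr_sumr ha2 hb2; ring.
Qed.

Lemma conv_col (R : realType) p n (A : 'M[R]_(p, n)) j : conv_mx A (col j A).
Proof.
exists (delta_mx j 0); last by rewrite colE.
split; first by move=> i; rewrite mxE; case: (_ && _).
rewrite (bigD1 j) //= big1 ?addr0; first by rewrite mxE !eqxx.
by move=> i /negPf ij; rewrite mxE ij.
Qed.

Lemma vnormZ_le (R : realType) m (N : 'cV[R]_m -> R) (v : 'cV[R]_m) k w :
  is_norm N -> 1 <= `|k| -> vnorm N v (k *: w) <= `|k| * vnorm N v w.
Proof.
move=> [_ hZ _] k1.
have eu : usubmx (k *: w) = k *: usubmx w by apply/matrixP => i j; rewrite !mxE.
have ed : dsubmx (k *: w) 0 0 = k * dsubmx w 0 0 by rewrite !mxE.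
have edot : dotv v (k *: usubmx w) = k * dotv v (usubmx w).
  rewrite /dotv mulr_sumr; apply: eq_bigr => i _; rewrite mxE; ring.
rewrite /vnorm eu ed hZ edot -mulrDr normrM.
rewrite -[`|k|]sqrtr_sqr -sqrtrM ?sqr_ge0 // ler_sqrt; last first.
  by apply: mulr_ge0; [exact: sqr_ge0 | apply: addr_ge0; [exact: sqr_ge0|]].
rewrite sqrtr_sqr.
have hk2 : k ^+ 2 = `|k| ^+ 2 by rewrite -normrX ger0_norm // sqr_ge0.
rewrite hk2.
have hh : 0 <= `|k| * `|dotv v (usubmx w) + dsubmx w 0 0| * (`|k| - 1).
  by apply: mulr_ge0; [apply: mulr_ge0 | rewrite subr_ge0].
move: hh k1; set a := `|k|; set L := `| _ + _ |; set M := N _.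
move=> hh k1; nra.
Qed.

Lemma vnorm_eq0 (R : realType) m (N : 'cV[R]_m -> R) (v : 'cV[R]_m) w :
  is_norm N -> vnorm N v w = 0 -> w = 0.
Proof.
move=> [h0 _ _] /eqP; rewrite /vnorm sqrtr_eq0 => hle.
have hN : N (usubmx w) ^+ 2 = 0.
  apply/eqP; rewrite eq_le sqr_ge0 andbT.
  by apply: le_trans hle; rewrite lerDl.
have hL : `|dotv v (usubmx w) + dsubmx w 0 0| = 0.
  apply/eqP; rewrite eq_le normr_ge0 andbT.
  by apply: le_trans hle; rewrite lerDr sqr_ge0.
move/eqP: hN; rewrite sqrf_eq0 => /eqP /h0 hu.
move/eqP: hL; rewrite normr_eq0 hu /dotv big1 ?add0r; last by move=> i _; rewrite mxE mulr0.
move=> /eqP hd.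
rewrite -[w]vsubmxK hu; apply/matrixP => i j; rewrite (ord1 j) !mxE.
case: splitP => k _; first by rewrite ?mxE.
by rewrite (ord1 k) hd ?mxE.
Qed.



Lemma Fv_ext (R : realType) m n (v : 'cV[R]_m) (A : 'M[R]_(m + 1, n)) c a b (t : R) :
  Fv v A c -> conv_mx A a -> conv_mx A b -> 0 < t -> t <= 1 ->
  c = t *: a + (1 - t) *: b -> Fv v A a.
Proof.
move=> [cc hc] ca cb t0 t1 ce; split => // w' cw'.
have La := hc a ca; have Lb := hc b cb.
have Lc : lin1 v c = t * lin1 v a + (1 - t) * lin1 v b by rewrite ce lin1D !lin1Z.
have : lin1 v a <= lin1 v c.
  have h1 : 0 <= (1 - t) * (lin1 v b - lin1 v c).
    by apply: mulr_ge0; rewrite subr_ge0.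
  have h2 : t * (lin1 v a - lin1 v c) <= 0 by nra.
  rewrite -subr_le0; move: h2; rewrite pmulr_rle0 //.
move=> h; exact: le_trans h (hc w' cw').
Qed.

Definition Gset (R : realType) p n (A : 'M[R]_(p, n)) (g : 'cV[R]_p) : set 'cV[R]_p :=
  [set a | conv_mx A a /\ exists e : R, 0 < e /\ conv_mx A (g + e *: (g - a))].

Lemma G_shrink (R : realType) p n (A : 'M[R]_(p, n)) g a (e e' : R) :
  conv_mx A g -> conv_mx A (g + e *: (g - a)) -> 0 < e' -> e' <= e ->
  conv_mx A (g + e' *: (g - a)).
Proof.
move=> cg ce e'0 e'e.
have e0 : 0 < e by exact: lt_le_trans e'0 e'e.
have -> : g + e' *: (g - a) = (e' / e) *: (g + e *: (g - a)) + (1 - e' / e) *: g.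
  apply/matrixP => i j; rewrite !mxE; field; exact: lt0r_neq0.
apply: conv_convex => //; apply/andP; split.
  by apply: divr_ge0; apply: ltW.
by rewrite ler_pdivrMr // mul1r.
Qed.

Lemma G_self (R : realType) p n (A : 'M[R]_(p, n)) g : conv_mx A g -> Gset A g g.
Proof. by move=> cg; split => //; exists 1; split => //; rewrite subrr scaler0 addr0. Qed.

Lemma ge_min_l (R : realType) (a b : R) : Num.min a b <= a.
Proof. by rewrite ge_min lexx. Qed.
Lemma ge_min_r (R : realType) (a b : R) : Num.min a b <= b.
Proof. by rewrite ge_min lexx orbT. Qed.

Lemma G_convex (R : realType) p n (A : 'M[R]_(p, n)) g a1 a2 (s : R) :
  conv_mx A g -> Gset A g a1 -> Gset A g a2 -> 0 <= s <= 1 ->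
  Gset A g (s *: a1 + (1 - s) *: a2).
Proof.
move=> cg [c1 [e1 [e10 h1]]] [c2 [e2 [e20 h2]]] hs.
split; first exact: conv_convex.
exists (Num.min e1 e2); split; first by rewrite lt_min e10 e20.
have k1 := G_shrink cg h1 (_ : 0 < Num.min e1 e2) (_ : Num.min e1 e2 <= e1).
have k2 := G_shrink cg h2 (_ : 0 < Num.min e1 e2) (_ : Num.min e1 e2 <= e2).
have m0 : 0 < Num.min e1 e2 by rewrite lt_min e10 e20.
have := conv_convex (k1 m0 (ge_min_l _ _)) (k2 m0 (ge_min_r _ _)) hs.
congr (conv_mx A _); apply/matrixP => i j; rewrite !mxE; ring.
Qed.

Lemma G_ext1 (R : realType) p n (A : 'M[R]_(p, n)) g a1 a2 (s : R) :
  conv_mx A g -> conv_mx A a1 -> conv_mx A a2 -> 0 < s < 1 ->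
  Gset A g (s *: a1 + (1 - s) *: a2) -> Gset A g a1.
Proof.
move=> cg c1 c2 /andP[s0 s1] [_ [e [e0 he]]].
split => //.
pose th := (1 + e * (1 - s))^-1.
have d0 : 0 < 1 + e * (1 - s) by apply: addr_gt0 => //; apply: mulr_gt0; rewrite ?subr_gt0.
have th0 : 0 < th by rewrite invr_gt0.
have th1 : th <= 1.
  rewrite invf_le1 // lerDl; apply: mulr_ge0; [exact: ltW|]; rewrite subr_ge0; exact: ltW.
exists (e * s * th); split; first by apply: mulr_gt0 => //; apply: mulr_gt0.
have -> : g + (e * s * th) *: (g - a1) =
  th *: (g + e *: (g - (s *: a1 + (1 - s) *: a2))) + (1 - th) *: a2.
  apply/matrixP => i j; rewrite !mxE /th; field; exact: lt0r_neq0.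
apply: conv_convex => //; apply/andP; split; exact: ltW || exact: th1.
Qed.

Lemma G_sub_Fv (R : realType) m n (v : 'cV[R]_m) (A : 'M[R]_(m + 1, n)) g a :
  Fv v A g -> Gset A g a -> Fv v A a.
Proof.
move=> fg [ca [e [e0 he]]].
have d0 : 0 < 1 + e by rewrite addr_gt0.
apply: (@Fv_ext _ _ _ v A g a _ (e / (1 + e)) fg ca he).
- by apply: divr_gt0.
- by rewrite ler_pdivrMr // mul1r lerDr.
- apply/matrixP => i j; rewrite !mxE; field; exact: lt0r_neq0.
Qed.

Lemma G_face (R : realType) m n (v : 'cV[R]_m) (A : 'M[R]_(m + 1, n)) g :
  Fv v A g -> is_face (Fv v A) (Gset A g).
Proof.
move=> fg; have cg : conv_mx A g by case: fg.
split.
- by move=> a; apply: G_sub_Fv.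
- by move=> a b t ha hb ht; apply: G_convex.
- move=> a b t [ca _] [cb _] ht hG; split; first exact: G_ext1 hG.
  have ht' : 0 < 1 - t < 1.
    by case/andP: ht => t0 t1; apply/andP; split; [rewrite subr_gt0 | rewrite ltrBlDr ltrDl].
  apply: (G_ext1 cg cb ca ht').
  have -> : (1 - t) *: b + (1 - (1 - t)) *: a = t *: a + (1 - t) *: b.
    by apply/matrixP => i j; rewrite !mxE; ring.
  exact: hG.
Qed.



Lemma maxmin (R : realType) (a b : R) : Num.max (a - b) 0 = a - Num.min a b.
Proof.
case: (leP a b) => h.
  by rewrite subrr; apply/max_idPr; rewrite subr_le0.
apply/max_idPl; rewrite subr_ge0; exact: ltW.
Qed.

Lemma distv_ge0 (R : realType) m (N : 'cV[R]_m -> R) v F G :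
  0 <= distv N v F G.
Proof.
rewrite /distv; set E := [set r | _].
have lb : lbound E 0 by move=> r [w [w' [_ [_ ->]]]]; exact: sqrtr_ge0.
case: (pselect (exists r, E r)) => [[r Er]|nE].
  by apply: lb_le_inf => //; exists r.
have -> : E = set0 by apply/seteqP; split => r // Er; apply: nE; exists r.
by rewrite inf0.
Qed.

Lemma diff_entry (R : realType) p (a b : 'cV[R]_p) : a != b -> exists i, a i 0 != b i 0.
Proof.
move=> hab; case: (pselect (exists i, a i 0 != b i 0)) => // hn.
exfalso; move/eqP: hab; apply; apply/matrixP => i j; rewrite (ord1 j).
by case: (a i 0 =P b i 0) => // hi; exfalso; apply: hn; exists i; apply/eqP.
Qed.



Unset Implicit Arguments.
Theorem lemma1 (R : realType) (m n : nat) (N : 'cV[R]_m -> R)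
  (Ab : 'M[R]_(m + 1, n)) (v : 'cV[R]_m) (ub : 'cV[R]_(m + 1)) (x : 'cV[R]_n) :
  is_norm N ->
  (exists i j : 'I_n, col i Ab != col j Ab) ->
  Fv v Ab ub -> simplex n x -> Ab *m x != ub ->
  let d := (vnorm N v (Ab *m x - ub))^-1 *: (Ab *m x - ub) in
  Phi N v Ab <=
    sup [set lam : R | exists y z : 'cV[R]_n,
           [/\ simplex n y, simplex n z, supp y `<=` supp x &
               Ab *m (y - z) = lam *: d]].
Proof.
move=> hN _ fub sx hne; cbv zeta.
set d := ((vnorm N v (Ab *m x - ub))^-1 *: (Ab *m x - ub)).
have [cub Lub] := fub.
have [w [sw Aw wmin]] : exists w, [/\ simplex n w, Ab *m w = ub &
    forall w', simplex n w' -> Ab *m w' = ub -> muf x w <= muf x w'].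
  by apply: min_exists; case: cub => w0 s0 e0; exists w0.
have [x0 x1] := sx; have [w0 w1] := sw.
pose r := \col_k Num.min (x k 0) (w k 0).
have r0 k : 0 <= r k 0 by rewrite mxE le_min x0 w0.
have rx k : r k 0 <= x k 0 by rewrite mxE ge_min lexx.
have rw k : r k 0 <= w k 0 by rewrite mxE ge_min lexx orbT.
pose mu := 1 - \sum_k r k 0.
have muEx : mu = \sum_k (x k 0 - r k 0) by rewrite sumrB x1.
have muEw : mu = \sum_k (w k 0 - r k 0) by rewrite sumrB w1.
have mufw : muf x w = mu.
  by rewrite muEx /muf; apply: eq_bigr => k _; rewrite maxmin mxE.
clearbody r.
have mu0 : 0 < mu.
  rewrite lt_neqAle muEx sumr_ge0 ?andbT; last by move=> k _; rewrite subr_ge0.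
  apply/eqP => /esym hs.
  have ex k : x k 0 = r k 0.
    apply/eqP; rewrite -subr_eq0; apply/eqP.
    by apply: (psumr_eq0P _ hs) => // j _; rewrite subr_ge0.
  have ew k : w k 0 = r k 0.
    have hs' : \sum_k (w k 0 - r k 0) = 0 by rewrite -muEw muEx.
    apply/eqP; rewrite -subr_eq0; apply/eqP.
    by apply: (psumr_eq0P _ hs') => // j _; rewrite subr_ge0.
  move/eqP: hne; apply; rewrite -Aw; congr (_ *m _).
  by apply/matrixP => i j; rewrite (ord1 j) ex ew.
have mu1 : mu <= 1 by rewrite lerBlDr lerDl sumr_ge0.
have mun0 : mu != 0 by exact: lt0r_neq0.
pose y := mu^-1 *: (x - r); pose z := mu^-1 *: (w - r).
have sy : simplex n y.
  split; first by move=> k; rewrite !mxE; apply: mulr_ge0; [rewrite invr_ge0; exact: ltW | rewrite subr_ge0; exact: rx].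
  rewrite (eq_bigr (fun k => mu^-1 * (x k 0 - r k 0))); last by move=> k _; rewrite !mxE.
  by rewrite -mulr_sumr -muEx mulVf.
have sz : simplex n z.
  split; first by move=> k; rewrite !mxE; apply: mulr_ge0; [rewrite invr_ge0; exact: ltW | rewrite subr_ge0; exact: rw].
  rewrite (eq_bigr (fun k => mu^-1 * (w k 0 - r k 0))); last by move=> k _; rewrite !mxE.
  by rewrite -mulr_sumr -muEw mulVf.
have suppy : supp y `<=` supp x.
  move=> k; rewrite /supp /= !mxE => hk.
  apply: le_lt_trans (r0 k) _; rewrite -subr_gt0.
  by move: hk; rewrite pmulr_rgt0 // invr_gt0.
have key : Ab *m (y - z) = mu^-1 *: (Ab *m x - ub).
  rewrite -Aw -mulmxBr scalemxAr; congr (_ *m _).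
  by apply/matrixP => i j; rewrite !mxE; ring.
pose g := Ab *m z; pose h := Ab *m y.
have cg : conv_mx Ab g by exists z.
have wE : w = r + mu *: z.
  by apply/matrixP => i j; rewrite !mxE; field.
have fg : Fv v Ab g.
  split => // c cc.
  have Lw : lin1 v ub = lin1 v (Ab *m r) + mu * lin1 v g.
    by rewrite -Aw wE mulmxDr -scalemxAr lin1D lin1Z.
  have Lr : (1 - mu) * lin1 v ub <= lin1 v (Ab *m r).
    rewrite lin1_mul /mu opprB addrC subrK mulr_suml.
    apply: ler_sum => k _; apply: ler_wpM2l => //.
    exact: Lub (conv_col _ _).
  have : lin1 v g <= lin1 v ub by nra.
  move=> h1; exact: le_trans h1 (Lub c cc).
pose G := Gset Ab g.
have minG j : 0 < x j 0 - r j 0 -> ~ G (col j Ab).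
  move=> pj [_ [e [e0 [ze sze zeE]]]].
  have [ze0 ze1] := sze.
  pose th := (1 + e)^-1.
  have e1 : 0 < 1 + e by rewrite addr_gt0.
  have th0 : 0 < th by rewrite invr_gt0.
  have th1 : 0 < 1 - th.
    by rewrite subr_gt0 invf_lt1 // ltrDl.
  pose w' := r + (mu * th) *: ze + (mu * (1 - th)) *: delta_mx j (0 : 'I_1).
  have w'E k : w' k 0 = r k 0 + mu * th * ze k 0 + mu * (1 - th) * (k == j)%:R.
    by rewrite !mxE eqxx andbT.
  have sw' : simplex n w'.
    split.
      move=> k; rewrite w'E; apply: addr_ge0; first apply: addr_ge0 => //.
        by apply: mulr_ge0 => //; apply: mulr_ge0; apply: ltW.
      by apply: mulr_ge0; [apply: mulr_ge0; apply: ltW | case: (k == j)].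
    rewrite (eq_bigr _ (fun k _ => w'E k)) !big_split /= -!mulr_sumr ze1.
    have hd : \sum_(k < n) ((k == j)%:R : R) = 1.
      by rewrite (bigD1 j) //= eqxx big1 ?addr0 // => k /negPf ->.
    rewrite hd /mu; ring.
  have Aw' : Ab *m w' = ub.
    rewrite !mulmxDr -!scalemxAr zeE -colE -Aw wE mulmxDr -scalemxAr.
    apply/matrixP => i k; rewrite !mxE /th; field; exact: lt0r_neq0.
  have := wmin _ sw' Aw'; rewrite mufw; apply/negP; rewrite -ltNge.
  rewrite muEx /muf (bigD1 j) //= [X in _ < X](bigD1 j) //=.
  apply: ltr_leD.
    rewrite gt_max pj andbT w'E eqxx.
    have : 0 < mu * (1 - th) * 1 by rewrite mulr1 mulr_gt0.
    have : 0 <= mu * th * ze j 0 by apply: mulr_ge0 => //; apply: mulr_ge0; apply: ltW.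
    rewrite (_ : true%:R = 1 :> R) //; lra.
  apply: ler_sum => k _; rewrite ge_max subr_ge0 rx andbT w'E.
  have : 0 <= mu * (1 - th) * (k == j)%:R.
    by apply: mulr_ge0; [apply: mulr_ge0; apply: ltW | case: (k == j)].
  have : 0 <= mu * th * ze k 0 by apply: mulr_ge0 => //; apply: mulr_ge0; apply: ltW.
  lra.
have [j pj] : exists j, 0 < x j 0 - r j 0.
  case: (pselect (exists j, 0 < x j 0 - r j 0)) => // hno; exfalso.
  have : mu <= 0.
    rewrite muEx; apply: sumr_le0 => k _; rewrite leNgt; apply/negP => hk.
    by apply: hno; exists k.
  by rewrite leNgt mu0.
have faceG : is_face (Fv v Ab) G := G_face fg.
have Gne : G !=set0 by exists g; exact: G_self.
have Gnc : G <> conv_mx Ab.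
  by move=> e; apply: (minG j pj); rewrite e; exact: conv_col.
have Hh : conv_cols Ab [set j | ~ G (col j Ab)] h.
  exists y => //; split => // k hk /=; apply: minG.
  move: hk; rewrite !mxE mulf_eq0 negb_or => /andP[_ hk].
  by rewrite lt_neqAle eq_sym hk subr_ge0 rx.
pose V := vnorm N v (Ab *m x - ub).
have V0 : V != 0.
  apply/eqP => /(vnorm_eq0 hN) /eqP; rewrite subr_eq0; exact/negP.
have V0' : 0 < V by rewrite lt_neqAle eq_sym V0 sqrtr_ge0.
pose lam := V / mu.
set S := [set lam | _].
have Slam : S lam.
  exists y, z; split => //; rewrite key /d scalerA; congr (_ *: _).
  rewrite /lam -/V; field; apply/andP; split => //.
have hgh : vnorm N v (g - h) <= lam.
  have -> : g - h = (- mu^-1) *: (Ab *m x - ub).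
    by rewrite scaleNr -key mulmxBr opprB.
  apply: le_trans (vnormZ_le _ _ hN _) _.
    by rewrite normrN ger0_norm; [rewrite invf_ge1 | rewrite invr_ge0; exact: ltW].
  by rewrite normrN ger0_norm; [rewrite mulrC | rewrite invr_ge0; exact: ltW].
have hsup : has_sup S.
  split; first by exists lam.
  have [i hi] := diff_entry hne.
  have di : d i 0 != 0.
    move: hi; rewrite /d !mxE => hi; rewrite mulf_neq0 // ?invr_eq0 // subr_eq0. exact: hi.
  have di0 : 0 < `|d i 0| by rewrite normr_gt0; exact: di.
  exists ((\sum_k `|Ab i k|) / `|d i 0|) => l [y' [z' [sy' sz' _ hl]]].
  have hl' : l * d i 0 = \sum_k Ab i k * (y' k 0 - z' k 0).
    have := congr1 (fun M : 'cV[R]_(m + 1) => M i 0) hl; rewrite /= !mxE => <-.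
    by apply: eq_bigr => k _; rewrite !mxE.
  apply: le_trans (ler_norm l) _.
  rewrite ler_pdivlMr // -normrM hl'.
  apply: le_trans (ler_norm_sum _ _ _) _.
  apply: ler_sum => k _; rewrite normrM ler_piMr //.
  have := simplex_le1 k sy'; have := simplex_le1 k sz'.
  have [y0' _] := sy'; have [z0' _] := sz'.
  have := y0' k; have := z0' k.
  rewrite ler_norml; move=> *; apply/andP; split; lra.
apply: (@le_trans _ _ (distv N v G (conv_cols Ab [set j | ~ G (col j Ab)]))).
  apply: ge_inf.
    exists 0 => t [G' [_ _ _ ->]]; exact: distv_ge0.
  by exists G; split.
apply: (@le_trans _ _ (vnorm N v (g - h))).
  apply: ge_inf.
    by exists 0 => t [q1 [q2 [_ [_ ->]]]]; exact: sqrtr_ge0.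
  by exists g, h; split; [exact: G_self | split].
apply: le_trans hgh _.
exact: sup_upper_bound hsup _ Slam.
Qed.
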